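(* The function $$u(z)=-8\frac{(1-|z|^2)^4}{|1-z|^2}+\frac{3}{2}\frac{(1-|z|^2)^4}{|1-z|^4}-6\frac{(1-|z|^2)^5}{|1-z|^4}-3\frac{(1-|z|^2)^5}{|1-z|^6}+\frac{(1-|z|^2)^7}{|1-z|^8},\quad z\in\mathbb{D},$$ is $w_2$-biharmonic in $\mathbb{D}$, i.e. $\Delta\big((1-|z|^2)^{-2}\Delta u\big)=0$ in $\mathbb{D}$.
   Context: $\mathbb{D}$ is the open unit disc and $\Delta=\partial^2/\partial z\partial\bar z$. The weight is $w_2(z)=(1-|z|^2)^2$, and $u$ is called $w_2$-biharmonic if $\Delta w_2^{-1}\Delta u=0$ in $\mathbb{D}$. *)

(* Defs.v *)
From Stdlib Require Import Reals.
From Coquelicot Require Import Coquelicot.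
Open Scope R_scope.

(* A point z = x + i y of the plane is represented by its real coordinates. *)
Definition unit_disc (x y : R) : Prop := x ^ 2 + y ^ 2 < 1.

Definition partial_x (f : R -> R -> R) (x y : R) : R := Derive (fun t => f t y) x.
Definition partial_y (f : R -> R -> R) (x y : R) : R := Derive (fun t => f x t) y.

(* Delta = d^2/(dz dzbar) = (1/4)(d^2/dx^2 + d^2/dy^2). *)
Definition Delta (f : R -> R -> R) (x y : R) : R :=
  / 4 * (partial_x (partial_x f) x y + partial_y (partial_y f) x y).

(* f has (first and) second pure partial derivatives at (x,y), so that
   Delta f x y is a genuine value and not a default of the total Derive. *)
Definition twice_partially_differentiable (f : R -> R -> R) (x y : R) : Prop :=
  ex_derive (fun t => f t y) x /\ ex_derive (fun t => partial_x f t y) x /\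
  ex_derive (fun t => f x t) y /\ ex_derive (fun t => partial_y f x t) y.

Definition w2 (x y : R) : R := (1 - (x ^ 2 + y ^ 2)) ^ 2.

Definition u_prop (x y : R) : R :=
  let s := 1 - (x ^ 2 + y ^ 2) in
  let d := (1 - x) ^ 2 + y ^ 2 in
  - 8 * s ^ 4 / d + 3 / 2 * s ^ 4 / d ^ 2 - 6 * s ^ 5 / d ^ 2
  - 3 * s ^ 5 / d ^ 3 + s ^ 7 / d ^ 4.

Definition w2_biharmonic (u : R -> R -> R) : Prop :=
  forall x y, unit_disc x y ->
    twice_partially_differentiable u x y /\
    twice_partially_differentiable (fun a b => / w2 a b * Delta u a b) x y /\
    Delta (fun a b => / w2 a b * Delta u a b) x y = 0.

(* Main.v *)
Require Import Defs.
From Stdlib Require Import Reals Lra Psatz.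
From Coquelicot Require Import Coquelicot.
Open Scope R_scope.

Definition U1x (x y : R) : R := let s := 1 - (x^2+y^2) in let d := (1-x)^2+y^2 in
  ((-12)*x^1)*s^3/d^2 + (64*x^1)*s^3/d^1 + (6 + 24*x^1)*s^4/d^3 + ((-16) + 76*x^1)*s^4/d^2 + ((-18) + 18*x^1)*s^5/d^4 + ((-24) + 24*x^1)*s^5/d^3 + ((-14)*x^1)*s^6/d^4 + (8 + (-8)*x^1)*s^7/d^5.

Definition U2x (x y : R) : R := let s := 1 - (x^2+y^2) in let d := (1-x)^2+y^2 in
  (72*x^2)*s^2/d^2 + ((-384)*x^2)*s^2/d^1 + ((-96)*x^1 + (-144)*x^2)*s^3/d^3 + ((-12) + 256*x^1 + (-736)*x^2)*s^3/d^2 + (64)*s^3/d^1 + (36 + 288*x^1 + (-324)*x^2)*s^4/d^4 + ((-40) + 608*x^1 + (-544)*x^2)*s^4/d^3 + (76)*s^4/d^2 + ((-144) + 288*x^1 + (-144)*x^2)*s^5/d^5 + ((-126) + 288*x^1 + 24*x^2)*s^5/d^4 + (24)*s^5/d^3 + ((-224)*x^1 + 224*x^2)*s^6/d^5 + ((-14))*s^6/d^4 + (80 + (-160)*x^1 + 80*x^2)*s^7/d^6 + ((-8))*s^7/d^5.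

Definition U1y (x y : R) : R := let s := 1 - (x^2+y^2) in let d := (1-x)^2+y^2 in
  ((-12)*y^1)*s^3/d^2 + (64*y^1)*s^3/d^1 + (24*y^1)*s^4/d^3 + (76*y^1)*s^4/d^2 + (18*y^1)*s^5/d^4 + (24*y^1)*s^5/d^3 + ((-14)*y^1)*s^6/d^4 + ((-8)*y^1)*s^7/d^5.

Definition U2y (x y : R) : R := let s := 1 - (x^2+y^2) in let d := (1-x)^2+y^2 in
  (72*y^2)*s^2/d^2 + ((-384)*y^2)*s^2/d^1 + ((-144)*y^2)*s^3/d^3 + ((-12) + (-736)*y^2)*s^3/d^2 + (64)*s^3/d^1 + ((-324)*y^2)*s^4/d^4 + (24 + (-544)*y^2)*s^4/d^3 + (76)*s^4/d^2 + ((-144)*y^2)*s^5/d^5 + (18 + 24*y^2)*s^5/d^4 + (24)*s^5/d^3 + (224*y^2)*s^6/d^5 + ((-14))*s^6/d^4 + (80*y^2)*s^7/d^6 + ((-8))*s^7/d^5.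

Definition G (x y : R) : R := let s := 1 - (x^2+y^2) in let d := (1-x)^2+y^2 in
  (18)/d^2 + ((-96))/d^1 + ((-60))*s^1/d^3 + ((-132))*s^1/d^2 + (96)*s^1/d^1 + (24)*s^2/d^3 + (114)*s^2/d^2 + (60)*s^3/d^4 + (36)*s^3/d^3 + ((-21))*s^4/d^4 + ((-12))*s^5/d^5.

Definition Gx (x y : R) : R := let s := 1 - (x^2+y^2) in let d := (1-x)^2+y^2 in
  (72 + 48*x^1)/d^3 + ((-192) + 456*x^1)/d^2 + ((-192)*x^1)/d^1 + ((-360) + 360*x^1)*s^1/d^4 + ((-528) + 432*x^1)*s^1/d^3 + (192 + (-648)*x^1)*s^1/d^2 + (144 + (-504)*x^1)*s^2/d^4 + (456 + (-672)*x^1)*s^2/d^3 + (480 + (-480)*x^1)*s^3/d^5 + (216 + (-48)*x^1)*s^3/d^4 + ((-168) + 288*x^1)*s^4/d^5 + ((-120) + 120*x^1)*s^5/d^6.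

Definition Gxx (x y : R) : R := let s := 1 - (x^2+y^2) in let d := (1-x)^2+y^2 in
  (432 + 576*x^1 + (-1008)*x^2)/d^4 + ((-720) + 3648*x^1 + (-2688)*x^2)/d^3 + (456 + (-768)*x^1 + 1680*x^2)/d^2 + ((-192))/d^1 + ((-2880) + 5760*x^1 + (-2880)*x^2)*s^1/d^5 + ((-2808) + 5184*x^1 + (-576)*x^2)*s^1/d^4 + (1200 + (-5184)*x^1 + 5280*x^2)*s^1/d^3 + ((-648))*s^1/d^2 + (1152 + (-8064)*x^1 + 6912*x^2)*s^2/d^5 + (2232 + (-8064)*x^1 + 4320*x^2)*s^2/d^4 + ((-672))*s^2/d^3 + (4800 + (-9600)*x^1 + 4800*x^2)*s^3/d^6 + (1248 + (-768)*x^1 + (-1920)*x^2)*s^3/d^5 + ((-48))*s^3/d^4 + ((-1680) + 5760*x^1 + (-4080)*x^2)*s^4/d^6 + (288)*s^4/d^5 + ((-1440) + 2880*x^1 + (-1440)*x^2)*s^5/d^7 + (120)*s^5/d^6.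

Definition Gy (x y : R) : R := let s := 1 - (x^2+y^2) in let d := (1-x)^2+y^2 in
  (48*y^1)/d^3 + (456*y^1)/d^2 + ((-192)*y^1)/d^1 + (360*y^1)*s^1/d^4 + (432*y^1)*s^1/d^3 + ((-648)*y^1)*s^1/d^2 + ((-504)*y^1)*s^2/d^4 + ((-672)*y^1)*s^2/d^3 + ((-480)*y^1)*s^3/d^5 + ((-48)*y^1)*s^3/d^4 + (288*y^1)*s^4/d^5 + (120*y^1)*s^5/d^6.

Definition Gyy (x y : R) : R := let s := 1 - (x^2+y^2) in let d := (1-x)^2+y^2 in
  ((-1008)*y^2)/d^4 + (48 + (-2688)*y^2)/d^3 + (456 + 1680*y^2)/d^2 + ((-192))/d^1 + ((-2880)*y^2)*s^1/d^5 + (360 + (-576)*y^2)*s^1/d^4 + (432 + 5280*y^2)*s^1/d^3 + ((-648))*s^1/d^2 + (6912*y^2)*s^2/d^5 + ((-504) + 4320*y^2)*s^2/d^4 + ((-672))*s^2/d^3 + (4800*y^2)*s^3/d^6 + ((-480) + (-1920)*y^2)*s^3/d^5 + ((-48))*s^3/d^4 + ((-4080)*y^2)*s^4/d^6 + (288)*s^4/d^5 + ((-1440)*y^2)*s^5/d^7 + (120)*s^5/d^6.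

Definition dd (x y : R) := (1-x)^2+y^2.
Definition ss (x y : R) := 1 - (x^2+y^2).

Ltac nz H := repeat split; repeat (apply Rmult_integral_contrapositive_currified || apply pow_nonzero);
  try lra; try (let E := fresh in intro E; apply H; rewrite <- E; ring).

Lemma U1x_ok x y : dd x y <> 0 -> is_derive (fun t => u_prop t y) x (U1x x y).
Proof. unfold dd, u_prop, U1x; cbv zeta; intro H. auto_derive. all: match goal with |- _ = _ => idtac | _ => nz H end.
  field. all: nz H. Qed.
Lemma U2x_ok x y : dd x y <> 0 -> is_derive (fun t => U1x t y) x (U2x x y).
Proof. unfold dd, U2x, U1x; cbv zeta; intro H. auto_derive. all: match goal with |- _ = _ => idtac | _ => nz H end.
  field. all: nz H. Qed.
Lemma U1y_ok x y : dd x y <> 0 -> is_derive (fun t => u_prop x t) y (U1y x y).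
Proof. unfold dd, u_prop, U1y; cbv zeta; intro H. auto_derive. all: match goal with |- _ = _ => idtac | _ => nz H end.
  field. all: nz H. Qed.
Lemma U2y_ok x y : dd x y <> 0 -> is_derive (fun t => U1y x t) y (U2y x y).
Proof. unfold dd, U2y, U1y; cbv zeta; intro H. auto_derive. all: match goal with |- _ = _ => idtac | _ => nz H end.
  field. all: nz H. Qed.
Lemma Gx_ok x y : dd x y <> 0 -> is_derive (fun t => G t y) x (Gx x y).
Proof. unfold dd, G, Gx; cbv zeta; intro H. auto_derive. all: match goal with |- _ = _ => idtac | _ => nz H end.
  field. all: nz H. Qed.
Lemma Gxx_ok x y : dd x y <> 0 -> is_derive (fun t => Gx t y) x (Gxx x y).
Proof. unfold dd, Gxx, Gx; cbv zeta; intro H. auto_derive. all: match goal with |- _ = _ => idtac | _ => nz H end.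
  field. all: nz H. Qed.
Lemma Gy_ok x y : dd x y <> 0 -> is_derive (fun t => G x t) y (Gy x y).
Proof. unfold dd, G, Gy; cbv zeta; intro H. auto_derive. all: match goal with |- _ = _ => idtac | _ => nz H end.
  field. all: nz H. Qed.
Lemma Gyy_ok x y : dd x y <> 0 -> is_derive (fun t => Gy x t) y (Gyy x y).
Proof. unfold dd, Gyy, Gy; cbv zeta; intro H. auto_derive. all: match goal with |- _ = _ => idtac | _ => nz H end.
  field. all: nz H. Qed.
Lemma lap_ok x y : dd x y <> 0 -> ss x y <> 0 ->
  / w2 x y * (/ 4 * (U2x x y + U2y x y)) = G x y.
Proof. unfold dd, ss, w2, G, U2x, U2y; cbv zeta; intros H H2.
  field; nz H; nz H2. Qed.
Lemma harm x y : dd x y <> 0 -> Gxx x y + Gyy x y = 0.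
Proof. unfold dd, Gxx, Gyy; cbv zeta; intros H.
  field. all: nz H. Qed.

Lemma loc_pos (f : R -> R) x : (forall t, ex_derive f t) -> 0 < f x ->
  locally x (fun t => 0 < f t).
Proof.
  intros Hd Hp.
  assert (Hc : continuous f x) by exact (@ex_derive_continuous R_AbsRing R_NormedModule f x (Hd x)).
  apply Hc. exists (mkposreal _ Hp). intros r Hr.
  change (Rabs (r - f x) < f x) in Hr.
  apply Rabs_lt_between in Hr. simpl. lra.
Qed.

Lemma disc_loc_x x y : unit_disc x y -> locally x (fun t => unit_disc t y).
Proof.
  unfold unit_disc; intro H.
  apply (filter_imp (fun t => 0 < 1 - (t^2 + y^2))); [intros t Ht; lra|].
  apply loc_pos; [intro t; auto_derive; auto | lra].
Qed.

Lemma disc_loc_y x y : unit_disc x y -> locally y (fun t => unit_disc x t).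
Proof.
  unfold unit_disc; intro H.
  apply (filter_imp (fun t => 0 < 1 - (x^2 + t^2))); [intros t Ht; lra|].
  apply loc_pos; [intro t; auto_derive; auto | lra].
Qed.

Lemma disc_dd x y : unit_disc x y -> dd x y <> 0.
Proof. unfold unit_disc, dd; intros H E. nra. Qed.

Lemma disc_ss x y : unit_disc x y -> ss x y <> 0.
Proof. unfold unit_disc, ss; intros H. lra. Qed.

Lemma ext_deriv (f g : R -> R) x l : locally x (fun t => g t = f t) ->
  is_derive g x l -> ex_derive f x /\ Derive f x = l.
Proof.
  intros Hl Hg. assert (Hf : is_derive f x l) by (eapply is_derive_ext_loc; eauto).
  split; [exists l; exact Hf | apply is_derive_unique; exact Hf].
Qed.

Lemma px_u a b : dd a b <> 0 -> partial_x u_prop a b = U1x a b.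
Proof. intro H. apply is_derive_unique, U1x_ok, H. Qed.
Lemma py_u a b : dd a b <> 0 -> partial_y u_prop a b = U1y a b.
Proof. intro H. apply is_derive_unique, U1y_ok, H. Qed.

Lemma pxx_u a b : unit_disc a b ->
  ex_derive (fun t => partial_x u_prop t b) a /\ partial_x (partial_x u_prop) a b = U2x a b.
Proof.
  intro H. apply (ext_deriv _ (fun t => U1x t b)); [|apply U2x_ok, disc_dd, H].
  apply (filter_imp (fun t => unit_disc t b)); [|apply disc_loc_x, H].
  intros t Ht. symmetry. apply px_u, disc_dd, Ht.
Qed.
Lemma pyy_u a b : unit_disc a b ->
  ex_derive (fun t => partial_y u_prop a t) b /\ partial_y (partial_y u_prop) a b = U2y a b.
Proof.
  intro H. apply (ext_deriv _ (fun t => U1y a t)); [|apply U2y_ok, disc_dd, H].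
  apply (filter_imp (fun t => unit_disc a t)); [|apply disc_loc_y, H].
  intros t Ht. symmetry. apply py_u, disc_dd, Ht.
Qed.

Definition hh (a b : R) := / w2 a b * Defs.Delta u_prop a b.

Lemma hh_G a b : unit_disc a b -> hh a b = G a b.
Proof.
  intro H. unfold hh, Defs.Delta. rewrite (proj2 (pxx_u a b H)), (proj2 (pyy_u a b H)).
  apply lap_ok; [apply disc_dd | apply disc_ss]; exact H.
Qed.

Lemma px_h a b : unit_disc a b -> ex_derive (fun t => hh t b) a /\ partial_x hh a b = Gx a b.
Proof.
  intro H. apply (ext_deriv _ (fun t => G t b)); [|apply Gx_ok, disc_dd, H].
  apply (filter_imp (fun t => unit_disc t b)); [|apply disc_loc_x, H].
  intros t Ht. symmetry. apply hh_G, Ht.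
Qed.
Lemma py_h a b : unit_disc a b -> ex_derive (fun t => hh a t) b /\ partial_y hh a b = Gy a b.
Proof.
  intro H. apply (ext_deriv _ (fun t => G a t)); [|apply Gy_ok, disc_dd, H].
  apply (filter_imp (fun t => unit_disc a t)); [|apply disc_loc_y, H].
  intros t Ht. symmetry. apply hh_G, Ht.
Qed.
Lemma pxx_h a b : unit_disc a b ->
  ex_derive (fun t => partial_x hh t b) a /\ partial_x (partial_x hh) a b = Gxx a b.
Proof.
  intro H. apply (ext_deriv _ (fun t => Gx t b)); [|apply Gxx_ok, disc_dd, H].
  apply (filter_imp (fun t => unit_disc t b)); [|apply disc_loc_x, H].
  intros t Ht. symmetry. apply px_h, Ht.
Qed.
Lemma pyy_h a b : unit_disc a b ->
  ex_derive (fun t => partial_y hh a t) b /\ partial_y (partial_y hh) a b = Gyy a b.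
Proof.
  intro H. apply (ext_deriv _ (fun t => Gy a t)); [|apply Gyy_ok, disc_dd, H].
  apply (filter_imp (fun t => unit_disc a t)); [|apply disc_loc_y, H].
  intros t Ht. symmetry. apply py_h, Ht.
Qed.

Theorem proposition3p2 : w2_biharmonic u_prop.
Proof.
  intros x y H. fold hh. split; [|split].
  - split; [exists (U1x x y); apply U1x_ok, disc_dd, H|].
    split; [apply pxx_u, H|].
    split; [exists (U1y x y); apply U1y_ok, disc_dd, H|].
    apply pyy_u, H.
  - split; [apply px_h, H|]. split; [apply pxx_h, H|].
    split; [apply py_h, H|]. apply pyy_h, H.
  - unfold Defs.Delta. rewrite (proj2 (pxx_h x y H)), (proj2 (pyy_h x y H)).
    rewrite harm; [ring | apply disc_dd, H].
Qed.
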